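(* Let $\Lambda,\Gamma\in\mathcal D_n^+$ and let $f,g:\mathcal D_n^+\to\mathcal D_n^+$ be stable mappings. Then the mappings $\Delta\mapsto\Lambda f(\Gamma\Delta)$, $\Delta\mapsto f(\Delta)^{-1}$, $f\circ g$ and $f+g$ are all stable mappings.
   Context: $\mathcal D_n^+$ is the set of $n\times n$ diagonal matrices with positive diagonal entries; $d_s(\Delta,\Delta')=\max_i\frac{|\Delta_i-\Delta'_i|}{\sqrt{\Delta_i\Delta'_i}}$. A mapping $f:\mathcal D_n^+\to\mathcal D_n^+$ is stable if $d_s(f(\Delta),f(\Delta'))\le d_s(\Delta,\Delta')$ for all $\Delta,\Delta'\in\mathcal D_n^+$. *)

(* Defs.v *)
From mathcomp Require Import all_boot all_order all_algebra.
From mathcomp Require Import reals.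
Set Implicit Arguments. Unset Strict Implicit. Unset Printing Implicit Defensive.
Import Order.TTheory GRing.Theory Num.Theory.
Local Open Scope ring_scope.

Definition posdiag (R : realType) (n : nat) (D : 'M[R]_n) : bool :=
  is_diag_mx D && [forall i, 0 < D i i].

Definition dS (R : realType) (n : nat) (D D' : 'M[R]_n) : R :=
  \big[Num.max/0]_(i < n) (`|D i i - D' i i| / Num.sqrt (D i i * D' i i)).

(* f is a stable mapping D_n^+ -> D_n^+ (f is a total function on matrices,
   only its behaviour on D_n^+ matters). *)
Definition stable_map (R : realType) (n : nat) (f : 'M[R]_n -> 'M[R]_n) : Prop :=
  (forall D, posdiag D -> posdiag (f D)) /\
  (forall D D', posdiag D -> posdiag D' -> dS (f D) (f D') <= dS D D').

(* Main.v *)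
Require Import Defs.
From mathcomp Require Import all_boot all_order all_algebra.
From mathcomp Require Import reals.
From mathcomp Require Import ring lra.
Import Order.TTheory GRing.Theory Num.Theory.
Local Open Scope ring_scope.

Section Aux.
Variables (R : realType) (n : nat).
Implicit Types (A B D X : 'M[R]_n).

Definition dt (a b : R) := `|a - b| / Num.sqrt (a * b).

Lemma dS_le A B t : 0 <= t -> (forall i, dt (A i i) (B i i) <= t) -> dS A B <= t.
Proof. move=> t0 H; rewrite /dS; elim/big_ind: _ => [//|x y hx hy|i _]; [by rewrite ge_max hx hy|exact: H]. Qed.

Lemma dt_le_dS A B i : dt (A i i) (B i i) <= dS A B.
Proof. exact: (le_bigmax 0 (fun i => dt (A i i) (B i i)) i). Qed.

Lemma dS_ge0 A B : 0 <= dS A B.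
Proof. exact: bigmax_ge_id. Qed.

Lemma posdiagP D : posdiag D <->
  (forall i j : 'I_n, i != j :> nat -> D i j = 0) /\ (forall i, 0 < D i i).
Proof.
rewrite /posdiag; split.
  by case/andP => /is_diag_mxP H /forallP H2.
by case=> H1 H2; apply/andP; split; [apply/is_diag_mxP|apply/forallP].
Qed.

Lemma diag_mulE A X i j : (forall i j : 'I_n, i != j :> nat -> A i j = 0) ->
  (A *m X) i j = A i i * X i j.
Proof.
move=> H; rewrite mxE (bigD1 i) //= big1 ?addr0 // => k ki.
by rewrite H ?mul0r // eq_sym.
Qed.

Lemma posdiag_mul A X : posdiag A -> posdiag X -> posdiag (A *m X).
Proof.
move=> /posdiagP [HA PA] /posdiagP [HX PX]; apply/posdiagP; split.
  by move=> i j ij; rewrite diag_mulE // HX // mulr0.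
by move=> i; rewrite diag_mulE // mulr_gt0.
Qed.

Definition dinv D : 'M[R]_n := \matrix_(i, j) if i == j then (D i i)^-1 else 0.

Lemma invmx_posdiag D : posdiag D -> invmx D = dinv D.
Proof.
move=> /posdiagP [HD PD].
have E : D *m dinv D = 1%:M.
  apply/matrixP => i j; rewrite diag_mulE // !mxE.
  case: eqP => [->|]; first by rewrite divff // gt_eqF.
  by rewrite mulr0.
have [uD _] := mulmx1_unit E.
by rewrite -[dinv D]mul1mx -(mulVmx uD) -mulmxA E mulmx1.
Qed.

Lemma posdiag_inv D : posdiag D -> posdiag (invmx D).
Proof.
move=> PD; rewrite invmx_posdiag //; move/posdiagP: PD => [HD PD].
apply/posdiagP; split.
  by move=> i j ij; rewrite mxE; case: eqP => // e; rewrite e eqxx in ij.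
by move=> i; rewrite mxE eqxx invr_gt0.
Qed.

Lemma posdiag_add A B : posdiag A -> posdiag B -> posdiag (A + B).
Proof.
move=> /posdiagP [HA PA] /posdiagP [HB PB]; apply/posdiagP; split.
  by move=> i j ij; rewrite mxE HA // HB // addr0.
by move=> i; rewrite mxE addr_gt0.
Qed.

Lemma dt_scale l a b : 0 < l -> 0 < a -> 0 < b -> dt (l * a) (l * b) = dt a b.
Proof.
move=> l0 a0 b0; rewrite /dt -mulrBr normrM (gtr0_norm l0).
rewrite mulrACA -expr2 sqrtrM ?sqr_ge0 // sqrtr_sqr (gtr0_norm l0).
have s0 : 0 < Num.sqrt (a * b) by rewrite sqrtr_gt0 mulr_gt0.
by rewrite invfM mulrACA divff ?gt_eqF // mul1r.
Qed.

Lemma dt_inv a b : 0 < a -> 0 < b -> dt a^-1 b^-1 = dt a b.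
Proof.
move=> a0 b0; rewrite /dt -invfM sqrtrV ?mulr_ge0 ?ltW //.
have s0 : 0 < Num.sqrt (a * b) by rewrite sqrtr_gt0 mulr_gt0.
have sq : Num.sqrt (a * b) ^+ 2 = a * b by rewrite sqr_sqrtr // mulr_ge0 ?ltW.
have -> : a^-1 - b^-1 = (b - a) / Num.sqrt (a * b) ^+ 2.
  by rewrite sq; field; rewrite ?gt_eqF.
rewrite normrM distrC normfV (ger0_norm (sqr_ge0 _)) invrK.
by field; rewrite gt_eqF.
Qed.

Lemma dt_add a b c d t : 0 < a -> 0 < b -> 0 < c -> 0 < d ->
  dt a b <= t -> dt c d <= t -> dt (a + c) (b + d) <= t.
Proof.
move=> a0 b0 c0 d0; rewrite /dt.
have s0 : 0 < Num.sqrt (a * b) by rewrite sqrtr_gt0 mulr_gt0.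
have u0 : 0 < Num.sqrt (c * d) by rewrite sqrtr_gt0 mulr_gt0.
have w0 : 0 < Num.sqrt ((a + c) * (b + d)) by rewrite sqrtr_gt0 mulr_gt0 ?addr_gt0.
rewrite !ler_pdivrMr // => H1 H2.
have t0 : 0 <= t.
  have := le_trans (normr_ge0 _) H1; rewrite pmulr_lge0 //.
have sq1 : Num.sqrt (a * b) ^+ 2 = a * b by rewrite sqr_sqrtr // mulr_ge0 ?ltW.
have sq2 : Num.sqrt (c * d) ^+ 2 = c * d by rewrite sqr_sqrtr // mulr_ge0 ?ltW.
have key : Num.sqrt (a * b) + Num.sqrt (c * d) <= Num.sqrt ((a + c) * (b + d)).
  set s := Num.sqrt (a * b) in s0 sq1 *; set u := Num.sqrt (c * d) in u0 sq2 *.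
  have e : s + u = Num.sqrt ((s + u) ^+ 2).
    by rewrite sqrtr_sqr ger0_norm // addr_ge0 // ltW.
  rewrite e; apply: ler_wsqrtr.
  have h1 : 4 * (a * b) * (c * d) <= (a * d + b * c) ^+ 2.
    have : 0 <= (a * d - b * c) ^+ 2 by apply: sqr_ge0.
    lra.
  have h2 : (2 * (s * u)) ^+ 2 <= (a * d + b * c) ^+ 2.
    have -> : (2 * (s * u)) ^+ 2 = 4 * (s ^+ 2) * (u ^+ 2) by ring.
    by rewrite sq1 sq2.
  have h3 : 2 * (s * u) <= a * d + b * c.
    rewrite -(ler_pXn2r (isT : (0 < 2)%N)) ?nnegrE //.
      by rewrite mulr_ge0 // mulr_ge0 // ltW.
    by rewrite addr_ge0 // mulr_ge0 // ltW.
  have -> : (s + u) ^+ 2 = s ^+ 2 + u ^+ 2 + 2 * (s * u) by ring.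
  rewrite sq1 sq2; lra.
have : `|a + c - (b + d)| <= `|a - b| + `|c - d|.
  have -> : a + c - (b + d) = (a - b) + (c - d) by ring.
  exact: ler_normD.
move=> h; apply: (le_trans h); apply: le_trans (lerD H1 H2) _.
by rewrite -mulrDr ler_wpM2l.
Qed.
End Aux.
Arguments dS_le {R n}. Arguments dt_le_dS {R n}. Arguments dS_ge0 {R n}.
Arguments posdiagP {R n D}. Arguments diag_mulE {R n}. Arguments posdiag_mul {R n A X}.
Arguments invmx_posdiag {R n D}. Arguments posdiag_inv {R n D}. Arguments posdiag_add {R n A B}.

Theorem mainTheorem6 (R : realType) (n : nat) (Lam Gam : 'M[R]_n)
    (f g : 'M[R]_n -> 'M[R]_n) :
  posdiag Lam -> posdiag Gam -> stable_map f -> stable_map g ->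
  [/\ stable_map (fun D => Lam *m f (Gam *m D)),
      stable_map (fun D => invmx (f D)),
      stable_map (fun D => f (g D))
    & stable_map (fun D => f D + g D)].
Proof.
move=> PL PG [fP fS] [gP gS].
have hL := PL; move/posdiagP: hL => [HL LL].
have hG := PG; move/posdiagP: hG => [HG GG].
have G1 : forall D D', posdiag D -> posdiag D' ->
    dS (Gam *m D) (Gam *m D') <= dS D D'.
  move=> D D' PD PD'; apply: dS_le; first exact: dS_ge0.
  move=> i; rewrite !diag_mulE // dt_scale //.
  - exact: dt_le_dS.
  - by case/posdiagP: PD.
  - by case/posdiagP: PD'.
split; split.
- by move=> D PD; apply: posdiag_mul => //; apply: fP; apply: posdiag_mul.
- move=> D D' PD PD'.
  have Q := posdiag_mul PG PD; have Q' := posdiag_mul PG PD'.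
  apply: le_trans (G1 _ _ PD PD'); apply: le_trans (fS _ _ Q Q').
  apply: dS_le; first exact: dS_ge0.
  move=> i; rewrite !diag_mulE // dt_scale //.
  - exact: dt_le_dS.
  - by case/posdiagP: (fP _ Q).
  - by case/posdiagP: (fP _ Q').
- by move=> D PD; apply: posdiag_inv; apply: fP.
- move=> D D' PD PD'; apply: le_trans (fS _ _ PD PD').
  apply: dS_le; first exact: dS_ge0.
  move=> i; rewrite !invmx_posdiag ?fP // !mxE eqxx dt_inv.
  - exact: dt_le_dS.
  - by case/posdiagP: (fP _ PD).
  - by case/posdiagP: (fP _ PD').
- by move=> D PD; apply: fP; apply: gP.
- move=> D D' PD PD'; apply: le_trans (gS _ _ PD PD').
  by apply: fS; apply: gP.
- by move=> D PD; apply: posdiag_add; [apply: fP|apply: gP].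
- move=> D D' PD PD'; apply: dS_le; first exact: dS_ge0.
  move=> i; rewrite !mxE.
  have [_ p1] := iffLR posdiagP (fP _ PD); have [_ p2] := iffLR posdiagP (fP _ PD').
  have [_ p3] := iffLR posdiagP (gP _ PD); have [_ p4] := iffLR posdiagP (gP _ PD').
  apply: dt_add => //.
  + exact: le_trans (dt_le_dS _ _ i) (fS _ _ PD PD').
  + exact: le_trans (dt_le_dS _ _ i) (gS _ _ PD PD').
Qed.
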